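(* Let $p\geq 1$ be an integer, $\alpha>0$, and let $\lambda\in\mathbb{C}$, $\lambda\neq 0$. Consider an explicit time-marching scheme whose stability region contains the real segment $[-C,0]$, where $C>0$ is the largest value such that the scheme applied to $dy/dt=\mu y$ with real $\mu<0$ is stable whenever $|\mu\Delta t|\leq C$. If $\alpha\geq\alpha_{\min}=(2^p-1)/C$, then the explicit time integration of $dy/dt=T^{(p)}_{\lambda}(\alpha,\Delta t)\,\lambda\, y$ with this scheme remains stable in the limit of very large time steps: the modified dimensionless eigenvalue satisfies $$\left(T^{(p)}_\lambda(\alpha,\Delta t)\lambda\right)\Delta t=-\frac{2^p-1}{\alpha}+\mathcal{O}(\Delta t^{-1})\quad(\Delta t\to\infty),$$ so that in this limit $-C\leq \left(T^{(p)}_\lambda(\alpha,\Delta t)\lambda\right)\Delta t<0$ lies on the negative real axis within the stability region of the scheme.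
   Context: For $\Delta t>0$, $\alpha>0$ and $\lambda\in\mathbb{C}$ (whenever the inverses exist), the TASE operator of order $p$ is defined recursively by $T^{(1)}_\lambda(\alpha,\Delta t)=(1-\alpha\Delta t\lambda)^{-1}$ and, for $p\geq 2$, $$T^{(p)}_\lambda(\alpha,\Delta t)=\frac{2^{p-1}T^{(p-1)}_\lambda(\alpha/2,\Delta t)-T^{(p-1)}_\lambda(\alpha,\Delta t)}{2^{p-1}-1}.$$ Equivalently $T^{(p)}_\lambda(\alpha,\Delta t)=\sum_{k=0}^{p-1}\beta_{p,k}(2^k-\alpha\Delta t\lambda)^{-1}$ for suitable rational constants $\beta_{p,k}$. The stability region of an explicit scheme is the set of $z=\mu\Delta t\in\mathbb{C}$ for which the scheme applied to $dy/dt=\mu y$ has amplification factor of modulus at most $1$. *)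

(* Defs.v *)
From HB Require Import structures.
From mathcomp Require Import all_boot all_order all_algebra.
From mathcomp Require Import complex.
Set Implicit Arguments. Unset Strict Implicit. Unset Printing Implicit Defensive.
Import Order.TTheory GRing.Theory Num.Theory.
Local Open Scope ring_scope.
Local Open Scope complex_scope.

(* tase_aux n a dt l = T^{(n+1)}_l(a, dt). Base case T^{(1)} = (1 - a dt l)^{-1};
   recursion T^{(p)}(a) = (2^{p-1} T^{(p-1)}(a/2) - T^{(p-1)}(a)) / (2^{p-1} - 1).
   (mathcomp's ^-1 of 0 is 0; the theorem asserts the relevant inverses exist.) *)
Fixpoint tase_aux (R : rcfType) (n : nat) (a dt : R) (l : R[i]) : R[i] :=
  match n with
  | 0 => (1 - (a * dt)%:C * l)^-1
  | n'.+1 => ((2 ^ n'.+1)%:R * tase_aux n' (a / 2) dt l - tase_aux n' a dt l)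
             / ((2 ^ n'.+1)%:R - 1)
  end.

Definition TASE (R : rcfType) (p : nat) (a dt : R) (l : R[i]) : R[i] :=
  tase_aux p.-1 a dt l.

(* Stability region of an explicit scheme given by its amplification factor
   z = mu*dt |-> Amp z for dy/dt = mu y. *)
Definition stability_region (R : rcfType) (Amp : R[i] -> R[i]) (z : R[i]) : Prop :=
  `|Amp z| <= 1.

(* Main.v *)
Require Import Defs.
From HB Require Import structures.
From mathcomp Require Import all_boot all_order all_algebra.
From mathcomp Require Import complex.
From mathcomp Require Import ring lra.
Import Order.TTheory GRing.Theory Num.Theory.
Local Open Scope ring_scope.
Local Open Scope complex_scope.

Lemma normE (R : rcfType) (z : R[i]) : `|z| = (ComplexField.Normc.normc z)%:C. Proof. by []. Qed.

Lemma aux (R : realFieldType) (q m : R) : 2 <= q -> q - 1 <= m -> m^-1 <= 2 / q.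
Proof.
move=> hq key.
have q0 : 0 < q by lra.
have m0 : 0 < m by lra.
have iq : q^-1 * q = 1 by rewrite mulVf // gt_eqF.
have iq0 : 0 < q^-1 by rewrite invr_gt0.
have im : m^-1 * m = 1 by rewrite mulVf // gt_eqF.
have im0 : 0 < m^-1 by rewrite invr_gt0.
rewrite -[m^-1]div1r ler_pdivrMr //.
have e1 : 0 <= (q - 2) * q^-1 by apply: mulr_ge0; lra.
have e2 : 0 <= (m - (q - 1)) * q^-1 by apply: mulr_ge0; lra.
nra.
Qed.

Lemma inv_bound (R : rcfType) (b dt n : R) (l : R[i]) : 0 < b -> 0 < n -> `|l| = n%:C ->
  2 / (b * n) <= dt ->
  (1 - (b * dt)%:C * l != 0) /\ `|(1 - (b * dt)%:C * l)^-1| <= (2 / (b * n * dt))%:C.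
Proof.
move=> b0 n0 ln hdt.
have bn0 : 0 < b * n by rewrite mulr_gt0.
have h2 : 2 <= dt * (b * n) by rewrite -ler_pdivrMr.
have dt0 : 0 < dt.
  by rewrite -(pmulr_lgt0 dt bn0); apply: lt_le_trans h2.
set w := 1 - _.
set m := ComplexField.Normc.normc w.
have key : b * n * dt - 1 <= m.
  have := lerB_dist ((b * dt)%:C * l) 1.
  rewrite normrM ln normr1 distrC -/w (@ger0_norm _ (b * dt)%:C); last first.
    by rewrite ler0c mulr_ge0 // ltW.
  rewrite normE -/m.
  rewrite -rmorphM -(rmorph1 (real_complex R)) -rmorphB lecR.
  by have -> : b * dt * n = b * n * dt by ring.
have m0 : 0 < m.
  apply: lt_le_trans key; lra.
have w0 : w != 0.
  apply/negP => /eqP w0; move: m0; rewrite /m w0.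
  by rewrite ComplexField.Normc.normc0 ltxx.
split=> //.
rewrite normrV ?unitfE // normE -/m -fmorphV lecR.
by apply: aux => //; rewrite mulrC.
Qed.


Lemma main_ind (R : rcfType) (l : R[i]) (n : R) : 0 < n -> `|l| = n%:C ->
  forall k (a : R), 0 < a ->
  exists K M : R, 0 < M /\ forall dt, M <= dt ->
   `|tase_aux k a dt l * l * dt%:C + (((2 ^ k.+1 - 1)%:R : R) / a)%:C| <= (K / dt)%:C.
Proof.
move=> n0 ln; elim=> [|k IH] a a0.
  exists (2 / (a * a * n)), (2 / (a * n)); split.
    by rewrite divr_gt0 // mulr_gt0.
  move=> dt hdt.
  have [w0 hw] := @inv_bound R a dt n l a0 n0 ln hdt.
  have dt0 : 0 < dt.
    by apply: lt_le_trans hdt; rewrite divr_gt0 // mulr_gt0.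
  have -> : tase_aux 0 a dt l * l * dt%:C + (((2 ^ 1 - 1)%:R : R) / a)%:C
     = (a%:C)^-1 * (1 - (a * dt)%:C * l)^-1.
    have -> : (2 ^ 1 - 1)%N = 1%N by [].
    move: w0; rewrite /= !rmorphM fmorphV rmorph1 => w0.
    have a0' : a%:C != 0 by rewrite -(rmorph0 (real_complex R)) (inj_eq (@complexI R)) gt_eqF.
    by field; apply/andP; split.
  rewrite -(fmorphV (real_complex R)) normrM ger0_norm; last by rewrite ler0c invr_ge0 ltW.
  apply: le_trans (ler_wpM2l _ hw) _; first by rewrite ler0c invr_ge0 ltW.
  rewrite -rmorphM lecR le_eqVlt; apply/orP; left; apply/eqP.
  by field; rewrite !gt_eqF.
have [K1 [M1 [M10 H1]]] := IH (a / 2) (divr_gt0 a0 (ltr0Sn _ 1)).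
have [K2 [M2 [M20 H2]]] := IH a a0.
set P := (2 ^ k.+1)%N.
have P1 : (1 <= P)%N by rewrite expn_gt0.
set c := (P - 1)%N.
have c0 : (0 < c)%N by rewrite /c subn_gt0 /P -{1}(expn0 2) ltn_exp2l.
have cR : (c%:R : R) = P%:R - 1 by rewrite natrB.
have cC : (c%:R : R[i]) = P%:R - 1 by rewrite natrB.
have c'R : (((2 ^ k.+2 - 1)%N)%:R : R) = 2 * P%:R - 1.
  by rewrite natrB ?expn_gt0 // expnS natrM.
exists ((P%:R * K1 + K2) / c%:R), (M1 + M2); split; first by lra.
move=> dt hdt.
have dt0 : 0 < dt by lra.
have h1 : M1 <= dt by lra.
have h2 : M2 <= dt by lra.
move: (H1 dt h1) (H2 dt h2); rewrite -/P -/c.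
set u1 := tase_aux k (a / 2) dt l * l * dt%:C + _.
set u2 := tase_aux k a dt l * l * dt%:C + _.
move=> hu1 hu2.
have Pc : (P%:R : R[i]) - 1 != 0 by rewrite -cC pnatr_eq0 -lt0n.
have a0' : a%:C != 0 by rewrite -(rmorph0 (real_complex R)) (inj_eq (@complexI R)) gt_eqF.
have -> : tase_aux k.+1 a dt l * l * dt%:C + ((2 ^ k.+2 - 1)%:R / a)%:C
    = (P%:R * u1 - u2) / c%:R.
  rewrite /u1 /u2 /= -/P c'R cR cC !(rmorphD, rmorphB, rmorphN, rmorphM, fmorphV, rmorph_nat, rmorph1).
  by field; apply/andP; split.
have cC0 : (c%:R : R[i]) != 0 by rewrite pnatr_eq0 -lt0n.
have dC0 : dt%:C != 0 by rewrite -(rmorph0 (real_complex R)) (inj_eq (@complexI R)) gt_eqF.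
have X : `|P%:R * u1 - u2| <= P%:R * (K1 / dt)%:C + (K2 / dt)%:C.
  apply: le_trans (ler_normB _ _) _; rewrite normrM normr_nat.
  by apply: lerD => //; apply: ler_wpM2l => //; apply: ler0n.
have E : ((P%:R * K1 + K2) / c%:R / dt)%:C = (P%:R * (K1 / dt)%:C + (K2 / dt)%:C) / c%:R.
  rewrite !(rmorphD, rmorphM, fmorphV, rmorph_nat).
  by field; apply/andP; split.
rewrite E normrM normfV normr_nat.
by apply: ler_wpM2r X; rewrite invr_ge0 ler0n.
Qed.


Theorem theorem1 (R : rcfType) (p : nat) (alpha C : R) (lam : R[i])
    (Amp : R[i] -> R[i]) :
  (1 <= p)%N -> 0 < alpha -> lam != 0 -> 0 < C ->
  (* the scheme's stability region contains the real segment [-C, 0] *)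
  (forall x : R, -C <= x <= 0 -> stability_region Amp x%:C) ->
  (* C is the largest such value *)
  (forall C' : R, C < C' -> exists x : R, -C' <= x <= 0 /\ ~ stability_region Amp x%:C) ->
  (2 ^ p - 1)%:R / C <= alpha ->
  let L : R := - (2 ^ p - 1)%:R / alpha in
  (* (T lam) dt = L + O(dt^-1) as dt -> oo, with all inverses defined *)
  (exists K M : R, 0 < M /\
     forall dt : R, M <= dt ->
       (forall j : nat, (j < p)%N -> 1 - ((alpha / (2 ^ j)%:R) * dt)%:C * lam != 0) /\
       `|TASE p alpha dt lam * lam * dt%:C - L%:C| <= (K / dt)%:C) /\
  (* the limit lies on the negative real axis inside the stability region *)
  (-C <= L /\ L < 0 /\ stability_region Amp L%:C).
Proof.
case: p => [//|q] p1 a0 l0 C0 Hst Hmax Ha L.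
set l := lam.
set n := ComplexField.Normc.normc l.
have ln : `|l| = n%:C by [].
have n0 : 0 < n by rewrite -ltcR -ln normr_gt0.
have [K [M [M0 H]]] := @main_ind R l n n0 ln q alpha a0.
have an0 : 0 < 2 / (alpha * n) by rewrite divr_gt0 // mulr_gt0.
have Q0 : 0 < ((2 ^ q.+1)%N%:R : R) by rewrite ltr0n expn_gt0.
have [X eX] : {X : R | X = 2 / (alpha * n)} by exists (2 / (alpha * n)).
rewrite -eX in an0.
have cpos : (0 < 2 ^ q.+1 - 1)%N by rewrite subn_gt0 -{1}(expn0 2) ltn_exp2l.
set c := (2 ^ q.+1 - 1)%N.
have cR : 0 < (c%:R : R) by rewrite ltr0n.
have Lneg : L < 0 by rewrite /L mulNr oppr_lt0 divr_gt0.
have LC : -C <= L.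
  rewrite /L mulNr lerN2 ler_pdivrMr //.
  by move: Ha; rewrite ler_pdivrMr // mulrC.
split; last first.
  split=> //; split=> //; apply: Hst; rewrite LC /=; exact: ltW.
exists K, (M + (2 ^ q.+1)%N%:R * X); split.
  by have := mulr_gt0 Q0 an0; lra.
move=> dt hdt.
have hM : M <= dt by have := mulr_gt0 Q0 an0; lra.
split.
  move=> j hj.
  have bj : 0 < alpha / (2 ^ j)%N%:R by rewrite divr_gt0 // ltr0n expn_gt0.
  suff hd : 2 / (alpha / (2 ^ j)%N%:R * n) <= dt.
    by case: (@inv_bound R (alpha / (2 ^ j)%N%:R) dt n l bj n0 ln hd).
  have e : 2 / (alpha / (2 ^ j)%N%:R * n) = (2 ^ j)%N%:R * X.
    rewrite eX; field; rewrite pnatr_eq0 -lt0n expn_gt0 /=.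
    by rewrite !gt_eqF.
  rewrite e.
  have : (2 ^ j)%N%:R * X <= (2 ^ q.+1)%N%:R * X.
    apply: ler_wpM2r; first exact: ltW.
    by rewrite ler_nat; apply: leq_pexp2l => //; exact: ltnW.
  move=> hh; apply: le_trans hh _; apply: le_trans _ hdt; rewrite lerDr; exact: ltW.
have := H dt hM.
by rewrite /TASE /= /L mulNr rmorphN opprK -/c.
Qed.
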